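(* In the setting of the context, let \[ I(t)=N-\tilde S e^{(\beta/\gamma)\tilde R}\varphi^{-1}(t)+\frac{\gamma}{\beta}\log\varphi^{-1}(t)-\tilde E e^{-\delta t}-\tilde S e^{(\beta/\gamma)\tilde R}e^{-\delta t}\int_{\varphi^{-1}(t)}^{u_0}e^{\delta\varphi(v)}dv\qquad(t\ge0). \] Then $I(\infty):=\lim_{t\to\infty}I(t)=0$, $I(t)>0$ on $[0,\infty)$, and $I$ attains its maximum $\max_{t\ge0}I(t)$ at some $t=T_2\in\{T: I'(T)=0\}$, where for $T>0$ \[ I'(T)=-\frac{\gamma+\delta}{\beta}\psi\bigl(\varphi^{-1}(T)\bigr)+\delta\Bigl(N-\tilde S e^{(\beta/\gamma)\tilde R}\varphi^{-1}(T)+\frac{\gamma}{\beta}\log\varphi^{-1}(T)\Bigr). \]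
   Context: Let $\beta,\gamma,\delta>0$ be constants and $\tilde S,\tilde E,\tilde I,\tilde R$ real numbers with $N:=\tilde S+\tilde E+\tilde I+\tilde R>0$. Standing assumptions: (A1) $\tilde I>0$; (A2) $\tilde E>(\gamma/\delta)\tilde I$; (A3) $\tilde S>\delta\tilde E/(\beta\tilde I)$; (A4) $\tilde R\ge 0$ and $N>\tilde S e^{(\beta/\gamma)\tilde R}+\tilde R$. Let $\alpha$ be the unique solution in $(\tilde R,N)$ of $x=N-\tilde S e^{(\beta/\gamma)\tilde R}e^{-(\beta/\gamma)x}$, and assume (A5) $\tilde S<(\gamma/\beta)e^{(\beta/\gamma)(\alpha-\tilde R)}$. Put $u_0:=e^{-(\beta/\gamma)\tilde R}$, $u_\infty:=e^{-(\beta/\gamma)\alpha}$. Let $\psi$ be the unique function, continuous and positive on $(u_\infty,u_0]$ and $C^1$ on $(u_\infty,u_0)$, satisfying $\psi'(u)\psi(u)-\frac{\gamma+\delta}{u}\psi(u)=-\delta\,\frac{\beta N-\beta\tilde S e^{(\beta/\gamma)\tilde R}u+\gamma\log u}{u}$ on $(u_\infty,u_0)$ and $\psi(u_0)=\beta\tilde I$. Let $\varphi(u):=\int_u^{u_0}\frac{d\xi}{\xi\psi(\xi)}$; $\varphi$ is a strictly decreasing continuous bijection from $(u_\infty,u_0]$ onto $[0,\infty)$, $C^1$ on $(u_\infty,u_0)$, with inverse $\varphi^{-1}:[0,\infty)\to(u_\infty,u_0]$. *)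

(* Defs.v *)
From Stdlib Require Export Reals.
From Coquelicot Require Export Coquelicot.
Open Scope R_scope.

Definition phi_of (psi : R -> R) (u0 u : R) : R :=
  RInt (fun xi => / (xi * psi xi)) u u0.

Definition I_of (beta gamma delta N St Et Rt : R) (psi : R -> R) (u0 : R)
  (phinv : R -> R) (t : R) : R :=
  N - St * exp (beta / gamma * Rt) * phinv t + gamma / beta * ln (phinv t)
  - Et * exp (- delta * t)
  - St * exp (beta / gamma * Rt) * exp (- delta * t)
    * RInt (fun v => exp (delta * phi_of psi u0 v)) (phinv t) u0.

(* Main.v *)
Require Import Defs.
From Stdlib Require Import Reals Lra.
From Coquelicot Require Import Coquelicot.
Open Scope R_scope.

Lemma ballR (x e y : R) : ball x e y <-> Rabs (y - x) < e.
Proof. split; intro H; exact H. Qed.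

Lemma cont_eps (f : R -> R) (x : R) :
  continuous f x <-> (forall eps, 0 < eps -> exists d, 0 < d /\ forall y, Rabs (y - x) < d -> Rabs (f y - f x) < eps).
Proof.
  split.
  - intros H eps He. destruct (proj1 (filterlim_locally f (f x)) H (mkposreal eps He)) as [d Hd].
    exists d. split. apply cond_pos. intros y Hy. apply Hd. apply ballR. exact Hy.
  - intros H. apply filterlim_locally. intros eps.
    destruct (H eps (cond_pos eps)) as [d [Hd H1]]. exists (mkposreal d Hd).
    intros y Hy. apply ballR. apply H1. apply ballR in Hy. exact Hy.
Qed.

Lemma cont_Rmin_left (h : R -> R) (a : R) :
  filterlim h (at_left a) (locally (h a)) -> continuous (fun x => h (Rmin x a)) a.
Proof.
  intros H. apply cont_eps. intros eps He.
  destruct (proj1 (filterlim_locally h (h a)) H (mkposreal eps He)) as [d Hd].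
  exists d. split. apply cond_pos. intros y Hy.
  rewrite (Rmin_left a a) by lra.
  destruct (Rlt_or_le y a) as [Hya|Hya].
  - rewrite Rmin_left by lra. apply ballR. apply Hd. apply ballR. exact Hy. exact Hya.
  - rewrite Rmin_right by lra. rewrite Rminus_diag, Rabs_R0. exact He.
Qed.

Lemma cont_Rmin (h : R -> R) (lo a : R) : lo < a ->
  (forall x, lo < x < a -> continuous h x) ->
  filterlim h (at_left a) (locally (h a)) ->
  forall x, lo < x -> continuous (fun y => h (Rmin y a)) x.
Proof.
  intros Hla Hc Hl x Hx.
  destruct (Rlt_or_le x a) as [H1|H1].
  - apply (continuous_ext_loc _ h).
    + assert (Hp : 0 < a - x) by lra. exists (mkposreal (a - x) Hp). intros y Hy. apply ballR in Hy. simpl in Hy.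
      change (Rabs (y - x) < a - x) in Hy. apply Rabs_lt_between in Hy. rewrite Rmin_left; auto. lra.
    + apply Hc. lra.
  - destruct (Req_dec x a) as [->|H2]. apply cont_Rmin_left; auto.
    apply (continuous_ext_loc _ (fun _ => h a)).
    + assert (Hp : 0 < x - a) by lra. exists (mkposreal (x - a) Hp). intros y Hy. apply ballR in Hy. simpl in Hy.
      change (Rabs (y - x) < x - a) in Hy. apply Rabs_lt_between in Hy. rewrite Rmin_right; auto. lra.
    + apply continuous_const.
Qed.

Lemma inv_derive (F g : R -> R) (t d : R) :
  is_derive F (g t) d -> d <> 0 -> continuous g t ->
  (exists r, 0 < r /\ forall s, Rabs (s - t) < r -> F (g s) = s /\ (s <> t -> g s <> g t)) ->
  is_derive g t (/ d).
Proof.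
  intros HF Hd Hg [r [Hr Hloc]].
  apply is_derive_Reals in HF. apply is_derive_Reals.
  intros eps He.
  assert (HC : 0 < Rabs d) by (apply Rabs_pos_lt; auto).
  set (e1 := Rmin (Rabs d / 2) (eps * (Rabs d * Rabs d) / 4)).
  assert (He1 : 0 < e1). { unfold e1. apply Rmin_pos; try lra. apply Rmult_lt_0_compat; [|lra]. apply Rmult_lt_0_compat; nra. }
  destruct (HF e1 He1) as [d1 Hd1].
  destruct (proj1 (cont_eps g t) Hg d1 (cond_pos d1)) as [d2 [Hd2 Hg2]].
  exists (mkposreal (Rmin d2 r) (Rmin_pos _ _ Hd2 Hr)).
  intros h Hh0 Hh. simpl in Hh.
  assert (Hh2 : Rabs h < d2) by (eapply Rlt_le_trans; [exact Hh| apply Rmin_l]).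
  assert (Hhr : Rabs h < r) by (eapply Rlt_le_trans; [exact Hh| apply Rmin_r]).
  destruct (Hloc (t + h)) as [HFs Hne]. replace (t + h - t) with h by ring. exact Hhr.
  destruct (Hloc t) as [HFt _]. rewrite Rminus_diag, Rabs_R0; exact Hr.
  set (k := g (t + h) - g t).
  assert (Hk0 : k <> 0). { unfold k. intro Hk. apply Hne. lra. lra. }
  assert (Hk1 : Rabs k < d1). { unfold k. apply Hg2. replace (t + h - t) with h by ring. exact Hh2. }
  specialize (Hd1 k Hk0 Hk1).
  replace (g t + k) with (g (t + h)) in Hd1 by (unfold k; ring).
  rewrite HFs, HFt in Hd1. replace (t + h - t) with h in Hd1 by ring.
  set (q := h / k) in *.
  assert (Hq0 : q <> 0). { unfold q. apply Rmult_integral_contrapositive; split; auto. apply Rinv_neq_0_compat; auto. }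
  change (Rabs ((g (t + h) - g t) / h - / d) < eps).
  replace ((g (t + h) - g t) / h) with (/ q) by (unfold q, k; field; auto).
  assert (E1 : e1 <= Rabs d / 2) by apply Rmin_l.
  assert (E2 : e1 <= eps * (Rabs d * Rabs d) / 4) by apply Rmin_r.
  assert (HB : Rabs d / 2 <= Rabs q).
  { pose proof (Rabs_triang_inv d q). rewrite <- Rabs_Ropp in Hd1. replace (- (q - d)) with (d - q) in Hd1 by ring. lra. }
  assert (Heq : Rabs (/ q - / d) * (Rabs q * Rabs d) = Rabs (q - d)).
  { rewrite <- Rabs_Ropp, <- !Rabs_mult. f_equal. field. auto. }
  assert (HA := Rabs_pos (/ q - / d)).
  set (A := Rabs (/ q - / d)) in *. set (B := Rabs q) in *. set (C := Rabs d) in *.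
  assert (H3 : A * (C / 2 * C) <= A * (B * C)).
  { apply Rmult_le_compat_l; auto. apply Rmult_le_compat_r; lra. }
  assert (H4 : A * (C * C) < eps * (C * C)) by lra.
  apply Rmult_lt_reg_r in H4; [exact H4| nra].
Qed.

Lemma cont_Rmin_id (a x : R) : continuous (fun y => Rmin y a) x.
Proof.
  apply cont_eps. intros eps He. exists eps. split; auto. intros y Hy.
  apply Rabs_lt_between in Hy. apply Rabs_lt_between.
  unfold Rmin; destruct (Rle_dec y a); destruct (Rle_dec x a); lra.
Qed.

Lemma deriv_contpt (f : R -> R) x l : is_derive f x l -> continuity_pt f x.
Proof.
  intros H. apply continuity_pt_filterlim. pose proof (ex_derive_continuous f x (ex_intro _ l H)) as Hc. exact Hc.
Qed.

Lemma deriv_cont (f : R -> R) x l : is_derive f x l -> continuous f x.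
Proof.
  intros H. pose proof (ex_derive_continuous f x (ex_intro _ l H)) as Hc. exact Hc.
Qed.

Lemma is_derive_eq (f : R -> R) (x l l' : R) : is_derive f x l -> l = l' -> is_derive f x l'.
Proof. intros H <-; exact H. Qed.

Lemma contpt_cont (f : R -> R) x : continuous f x -> continuity_pt f x.
Proof. intros H. apply continuity_pt_filterlim. exact H. Qed.

Lemma exd_cont (f : R -> R) x : ex_derive f x -> continuous f x.
Proof. intros H. pose proof (ex_derive_continuous f x H) as Hc. exact Hc. Qed.

Theorem theorem10
  (beta gamma delta St Et It Rt alpha : R) (psi phinv : R -> R)
  (Hbeta : 0 < beta) (Hgamma : 0 < gamma) (Hdelta : 0 < delta)
  (HN : 0 < St + Et + It + Rt)
  (A1 : 0 < It)
  (A2 : Et > gamma / delta * It)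
  (A3 : St > delta * Et / (beta * It))
  (A4a : 0 <= Rt)
  (A4b : St + Et + It + Rt > St * exp (beta / gamma * Rt) + Rt)
  (* alpha: the unique solution in (Rt, N) of x = N - St e^{(b/g)Rt} e^{-(b/g)x} *)
  (Halpha_int : Rt < alpha < St + Et + It + Rt)
  (Halpha_eq : alpha = St + Et + It + Rt
                 - St * exp (beta / gamma * Rt) * exp (- (beta / gamma) * alpha))
  (A5 : St < gamma / beta * exp (beta / gamma * (alpha - Rt)))
  (* psi: continuous and positive on (u_inf, u0], C^1 on (u_inf, u0), solving the ODE *)
  (Hpsi_pos : forall u, exp (- (beta / gamma) * alpha) < u <= exp (- (beta / gamma) * Rt) ->
                0 < psi u)
  (Hpsi_cont_left : filterlim psi (at_left (exp (- (beta / gamma) * Rt)))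
                      (locally (psi (exp (- (beta / gamma) * Rt)))))
  (Hpsi_C1 : forall u, exp (- (beta / gamma) * alpha) < u < exp (- (beta / gamma) * Rt) ->
                ex_derive psi u /\ continuous (Derive psi) u)
  (Hpsi_ode : forall u, exp (- (beta / gamma) * alpha) < u < exp (- (beta / gamma) * Rt) ->
                Derive psi u * psi u - (gamma + delta) / u * psi u
                = - delta * (beta * (St + Et + It + Rt)
                             - beta * St * exp (beta / gamma * Rt) * u + gamma * ln u) / u)
  (Hpsi_u0 : psi (exp (- (beta / gamma) * Rt)) = beta * It)
  (* phinv: the inverse of phi : (u_inf, u0] -> [0, oo) *)
  (Hphinv : forall t, 0 <= t ->
              exp (- (beta / gamma) * alpha) < phinv t <= exp (- (beta / gamma) * Rt)
              /\ phi_of psi (exp (- (beta / gamma) * Rt)) (phinv t) = t) :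
  let N := St + Et + It + Rt in
  let u0 := exp (- (beta / gamma) * Rt) in
  let I := I_of beta gamma delta N St Et Rt psi u0 phinv in
  is_lim I p_infty 0
  /\ (forall t, 0 <= t -> 0 < I t)
  /\ (forall T, 0 < T ->
        is_derive I T
          (- (gamma + delta) / beta * psi (phinv T)
           + delta * (N - St * exp (beta / gamma * Rt) * phinv T
                      + gamma / beta * ln (phinv T))))
  /\ (exists T2, 0 < T2 /\ is_derive I T2 0 /\ forall t, 0 <= t -> I t <= I T2).
Proof.
  intros N u0 I.
  set (ui := exp (- (beta / gamma) * alpha)) in *.
  set (U0 := exp (- (beta / gamma) * Rt)) in *.
  set (c := St * exp (beta / gamma * Rt)) in *.
  assert (Hui : 0 < ui) by apply exp_pos.
  assert (HuiU0 : ui < U0).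
  { unfold ui, U0. apply exp_increasing. assert (0 < beta / gamma) by (apply Rdiv_lt_0_compat; lra). nra. }
  assert (HEt : 0 < Et).
  { apply Rlt_trans with (gamma / delta * It); auto. apply Rmult_lt_0_compat; auto. apply Rdiv_lt_0_compat; lra. }
  assert (HSt : 0 < St).
  { eapply Rlt_trans; [|exact A3]. apply Rdiv_lt_0_compat; apply Rmult_lt_0_compat; lra. }
  assert (HcU0 : c * U0 = St).
  { unfold c, U0. rewrite Rmult_assoc, <- exp_plus. replace (beta / gamma * Rt + - (beta / gamma) * Rt) with 0 by ring. rewrite exp_0; ring. }
  assert (HlnU0 : gamma / beta * ln U0 = - Rt).
  { unfold U0. rewrite ln_exp. field. lra. }
  assert (Hlnui : gamma / beta * ln ui = - alpha).
  { unfold ui. rewrite ln_exp. field. lra. }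
  assert (Hc : 0 < c) by (unfold c; apply Rmult_lt_0_compat; [lra| apply exp_pos]).
  set (psie := fun x => psi (Rmin x U0)).
  assert (Hpsic : forall x, ui < x < U0 -> continuous psi x).
  { intros x Hx. apply exd_cont. apply (Hpsi_C1 x Hx). }
  assert (Hpsie_c : forall x, ui < x -> continuous psie x).
  { intros x Hx. apply (cont_Rmin psi ui U0); auto. }
  assert (Hpsie_pos : forall x, ui < x -> 0 < psie x).
  { intros x Hx. unfold psie. apply Hpsi_pos. split.
    apply Rmin_glb_lt; lra. apply Rmin_r. }
  set (fe := fun x => / (Rmin x U0 * psie x)).
  assert (Hfe_pos : forall x, ui < x -> 0 < fe x).
  { intros x Hx. unfold fe. apply Rinv_0_lt_compat. apply Rmult_lt_0_compat; auto.
    apply Rmin_glb_lt; lra. }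
  assert (Hfe_c : forall x, ui < x -> continuous fe x).
  { intros x Hx. unfold fe. apply continuous_Rinv_comp.
    apply (continuous_mult (fun y => Rmin y U0) psie). apply cont_Rmin_id. auto.
    apply Rgt_not_eq. apply Rmult_lt_0_compat; auto. apply Rmin_glb_lt; lra. }
  set (PHI := fun w => RInt fe w U0).
  assert (HPHI_d : forall w, ui < w -> is_derive PHI w (- fe w)).
  { intros w Hw. apply (is_derive_RInt' fe PHI w U0).
    - assert (Hp : 0 < w - ui) by lra. exists (mkposreal _ Hp). intros a Ha.
      apply ballR in Ha. change (Rabs (a - w) < w - ui) in Ha. apply Rabs_lt_between in Ha.
      apply (RInt_correct (V:=R_CompleteNormedModule)). apply (ex_RInt_continuous (V:=R_CompleteNormedModule)). intros z Hz. apply Hfe_c.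
      assert (Rmin a U0 <= z) by lra. assert (ui < Rmin a U0) by (apply Rmin_glb_lt; lra). lra.
    - apply Hfe_c; auto. }
  assert (HPHI_c : forall w, ui < w -> continuous PHI w).
  { intros w Hw. eapply deriv_cont. apply HPHI_d; auto. }
  assert (HPHI_dec : forall a b, ui < a -> a < b -> PHI b < PHI a).
  { intros a b Ha Hab. destruct (MVT_gen PHI a b (fun x => - fe x)) as [x [Hx Heq]].
    - intros x Hx. rewrite Rmin_left in Hx by lra. apply HPHI_d. lra.
    - intros x Hx. rewrite Rmin_left in Hx by lra. apply contpt_cont. apply HPHI_c. lra.
    - rewrite Rmin_left in Hx by lra. rewrite Rmax_right in Hx by lra.
      assert (0 < fe x) by (apply Hfe_pos; lra). nra. }
  assert (HPHI_U0 : PHI U0 = 0) by (unfold PHI; exact (RInt_point (V:=R_CompleteNormedModule) U0 fe)).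
  assert (HF5 : forall w, ui < w <= U0 -> phi_of psi U0 w = PHI w).
  { intros w Hw. unfold phi_of, PHI. apply RInt_ext. intros x Hx.
    rewrite Rmin_left in Hx by lra. rewrite Rmax_right in Hx by lra.
    unfold fe, psie. rewrite Rmin_left by lra. reflexivity. }
  assert (P1 : forall t, 0 <= t -> ui < phinv t <= U0 /\ PHI (phinv t) = t).
  { intros t Ht. destruct (Hphinv t Ht) as [H1 H2]. split; auto. rewrite <- HF5; auto. }
  assert (HPHI_le : forall a b, ui < a -> a <= b -> PHI b <= PHI a).
  { intros a b Ha Hab. destruct (Req_dec a b) as [->|Hne]. lra. left. apply HPHI_dec; lra. }
  assert (P2 : phinv 0 = U0).
  { destruct (P1 0 (Rle_refl 0)) as [[H1 H2] H3].
    destruct H2 as [H2|H2]; auto. exfalso. pose proof (HPHI_dec _ _ H1 H2). lra. }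
  assert (P3 : forall t, 0 < t -> phinv t < U0).
  { intros t Ht. destruct (P1 t ltac:(lra)) as [[H1 H2] H3].
    destruct H2 as [H2|H2]; auto. rewrite H2, HPHI_U0 in H3. lra. }
  assert (P4a : forall t w, 0 <= t -> ui < w -> t < PHI w -> w < phinv t).
  { intros t w Ht Hw Hlt. destruct (P1 t Ht) as [[H1 H2] H3].
    destruct (Rlt_or_le w (phinv t)) as [H|H]; auto. exfalso.
    pose proof (HPHI_le _ _ H1 H). lra. }
  assert (P4b : forall t w, 0 <= t -> ui < w -> PHI w < t -> phinv t < w).
  { intros t w Ht Hw Hlt. destruct (P1 t Ht) as [[H1 H2] H3].
    destruct (Rlt_or_le (phinv t) w) as [H|H]; auto. exfalso.
    pose proof (HPHI_le _ _ Hw H). lra. }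
  set (pe := fun s => phinv (Rmax s 0)).
  assert (Hpe : forall s, 0 <= s -> pe s = phinv s).
  { intros s Hs. unfold pe. rewrite Rmax_left; auto. }
  assert (Hpe_rng : forall s, ui < pe s <= U0).
  { intros s. unfold pe. apply P1. apply Rmax_r. }
  assert (P5 : forall t, 0 <= t -> continuous pe t).
  { intros t Ht. apply cont_eps. intros eps He.
    destruct (P1 t Ht) as [[Hu1 Hu2] Hu3].
    assert (Hw1 : ui < Rmax (phinv t - eps / 2) ((ui + phinv t) / 2) < phinv t /\
                  phinv t - Rmax (phinv t - eps / 2) ((ui + phinv t) / 2) <= eps / 2).
    { unfold Rmax. destruct (Rle_dec (phinv t - eps / 2) ((ui + phinv t) / 2)); lra. }
    set (w1 := Rmax (phinv t - eps / 2) ((ui + phinv t) / 2)) in *.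
    assert (HP1 : t < PHI w1). { rewrite <- Hu3 at 1. apply HPHI_dec; lra. }
    destruct (Req_dec t 0) as [Ht0|Ht0].
    - rewrite Ht0 in Hw1, HP1. rewrite P2 in Hw1. rewrite Ht0.
      exists (PHI w1). split. lra. intros y Hy.
      rewrite Rminus_0_r in Hy.
      assert (Hpe0 : pe 0 = U0). { rewrite Hpe by lra. exact P2. }
      rewrite Hpe0.
      destruct (Rle_or_lt y 0) as [Hy0|Hy0].
      + unfold pe. rewrite Rmax_right by lra. rewrite P2, Rminus_diag, Rabs_R0. lra.
      + rewrite Hpe by lra. apply Rabs_lt_between in Hy.
        assert (w1 < phinv y) by (apply P4a; lra).
        assert (phinv y <= U0) by (apply P1; lra).
        apply Rabs_lt_between. lra.
    - assert (Ht1 : 0 < t) by lra.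
      assert (Hu4 : phinv t < U0) by (apply P3; auto).
      assert (Hw2 : phinv t < Rmin (phinv t + eps / 2) U0 /\ Rmin (phinv t + eps / 2) U0 - phinv t <= eps / 2).
      { unfold Rmin. destruct (Rle_dec (phinv t + eps / 2) U0); lra. }
      set (w2 := Rmin (phinv t + eps / 2) U0) in *.
      assert (HP2 : PHI w2 < t). { rewrite <- Hu3. apply HPHI_dec; lra. }
      exists (Rmin t (Rmin (PHI w1 - t) (t - PHI w2))). split.
      { apply Rmin_pos; auto. apply Rmin_pos; lra. }
      intros y Hy. apply Rabs_lt_between in Hy.
      assert (Hm1 := Rmin_l t (Rmin (PHI w1 - t) (t - PHI w2))).
      assert (Hm2 := Rmin_r t (Rmin (PHI w1 - t) (t - PHI w2))).
      assert (Hm3 := Rmin_l (PHI w1 - t) (t - PHI w2)).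
      assert (Hm4 := Rmin_r (PHI w1 - t) (t - PHI w2)).
      rewrite !Hpe by lra.
      assert (w1 < phinv y) by (apply P4a; lra).
      assert (phinv y < w2) by (apply P4b; lra).
      apply Rabs_lt_between. lra. }
  assert (P6 : forall t, 0 < t -> is_derive phinv t (- (phinv t * psi (phinv t)))).
  { intros t Ht. destruct (P1 t ltac:(lra)) as [[Hu1 Hu2] Hu3].
    assert (Hu4 := P3 t Ht).
    assert (Hfe_u : fe (phinv t) = / (phinv t * psi (phinv t))).
    { unfold fe, psie. rewrite Rmin_left by lra. reflexivity. }
    assert (Hpsi_u : 0 < psi (phinv t)) by (apply Hpsi_pos; lra).
    apply (is_derive_eq _ _ (/ (- fe (phinv t)))).
    - apply (inv_derive PHI phinv t).
      + apply HPHI_d; auto.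
      + assert (0 < fe (phinv t)) by (apply Hfe_pos; auto). lra.
      + apply (continuous_ext_loc _ pe).
        * exists (mkposreal t Ht). intros y Hy. apply ballR in Hy. change (Rabs (y - t) < t) in Hy.
          apply Rabs_lt_between in Hy. apply Hpe. lra.
        * apply P5. lra.
      + exists t. split; auto. intros s Hs. apply Rabs_lt_between in Hs.
        split. apply P1; lra. intros Hst Heq. apply Hst.
        rewrite <- (proj2 (P1 s ltac:(lra))), <- (proj2 (P1 t ltac:(lra))), Heq. reflexivity.
    - rewrite Hfe_u. rewrite Rinv_opp, Rinv_inv. reflexivity. }
  set (h := fun v => exp (delta * PHI v)).
  assert (J1 : forall v, ui < v -> continuous h v).
  { intros v Hv. unfold h. apply continuous_exp_comp.
    apply (continuous_mult (fun _ => delta) PHI). apply continuous_const. apply HPHI_c; auto. }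
  set (JJ := fun w => RInt h w U0).
  assert (J2 : forall w, ui < w -> is_derive JJ w (- h w)).
  { intros w Hw. apply (is_derive_RInt' h JJ w U0).
    - assert (Hp : 0 < w - ui) by lra. exists (mkposreal _ Hp). intros a Ha.
      apply ballR in Ha. change (Rabs (a - w) < w - ui) in Ha. apply Rabs_lt_between in Ha.
      apply (RInt_correct (V:=R_CompleteNormedModule)). apply (ex_RInt_continuous (V:=R_CompleteNormedModule)).
      intros z Hz. apply J1.
      assert (Rmin a U0 <= z) by lra. assert (ui < Rmin a U0) by (apply Rmin_glb_lt; lra). lra.
    - apply J1; auto. }
  assert (J4 : JJ U0 = 0) by (unfold JJ; exact (RInt_point (V:=R_CompleteNormedModule) U0 h)).
  set (Gu := fun w => N - c * w + gamma / beta * ln w).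
  set (Ip := fun s => Gu (phinv s) - Et * exp (- delta * s) - c * exp (- delta * s) * JJ (phinv s)).
  assert (E1 : forall t, 0 <= t -> I t = Ip t).
  { intros t Ht. unfold I, I_of, Ip, Gu. unfold u0. fold c.
    replace (RInt (fun v => exp (delta * phi_of psi U0 v)) (phinv t) U0) with (JJ (phinv t)).
    reflexivity.
    unfold JJ. apply RInt_ext. intros x Hx. destruct (P1 t Ht) as [[H1 H2] _].
    rewrite Rmin_left in Hx by lra. rewrite Rmax_right in Hx by lra.
    unfold h. rewrite HF5 by lra. reflexivity. }
  assert (D1 : forall T, 0 < T -> is_derive I T (- (gamma / beta) * psi (phinv T) + delta * (Gu (phinv T) - I T))).
  { intros T HT. destruct (P1 T ltac:(lra)) as [[Hu1 Hu2] Hu3].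
    assert (Hu4 := P3 T HT).
    apply (is_derive_ext_loc Ip).
    { exists (mkposreal T HT). intros y Hy. apply ballR in Hy. change (Rabs (y - T) < T) in Hy.
      apply Rabs_lt_between in Hy. symmetry. apply E1. lra. }
    rewrite E1 by lra.
    assert (Exphi : ex_derive phinv T) by (eexists; apply P6; auto).
    assert (ExJ : ex_derive JJ (phinv T)) by (eexists; apply J2; auto).
    unfold Ip, Gu. auto_derive.
    - repeat split; auto; lra.
    - replace (Derive (fun x => phinv x) T) with (- (phinv T * psi (phinv T)))
        by (symmetry; apply is_derive_unique; apply P6; auto).
      replace (Derive (fun x => JJ x) (phinv T)) with (- h (phinv T))
        by (symmetry; apply is_derive_unique; apply J2; auto).
      unfold h. rewrite Hu3.
      replace (exp (delta * T)) with (/ exp (- delta * T))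
        by (rewrite <- exp_Ropp; f_equal; ring).
      assert (exp (- delta * T) > 0) by apply exp_pos.
      field. lra. }

  set (Y := fun t => psi (phinv t) / beta).
  assert (D2 : forall T, 0 < T -> is_derive Y T (Derive psi (phinv T) * (- (phinv T * psi (phinv T))) / beta)).
  { intros T HT. destruct (P1 T ltac:(lra)) as [[Hu1 Hu2] Hu3].
    assert (Hu4 := P3 T HT).
    assert (Exphi : ex_derive phinv T) by (eexists; apply P6; auto).
    assert (Expsi : ex_derive psi (phinv T)) by (apply Hpsi_C1; lra).
    unfold Y. auto_derive.
    - repeat split; auto.
    - replace (Derive (fun x => phinv x) T) with (- (phinv T * psi (phinv T)))
        by (symmetry; apply is_derive_unique; apply P6; auto).
      change (Derive (fun x => psi x) (phinv T)) with (Derive psi (phinv T)).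
      field. lra. }
  set (EE := fun t => exp (delta * t) * (I t - Y t)).
  assert (D3 : forall T, 0 < T -> is_derive EE T 0).
  { intros T HT. destruct (P1 T ltac:(lra)) as [[Hu1 Hu2] Hu3].
    assert (Hu4 := P3 T HT).
    assert (ExI : ex_derive I T) by (eexists; apply D1; auto).
    assert (ExY : ex_derive Y T) by (eexists; apply D2; auto).
    unfold EE. auto_derive.
    - repeat split; auto.
    - replace (Derive (fun x => I x) T) with (- (gamma / beta) * psi (phinv T) + delta * (Gu (phinv T) - I T))
        by (symmetry; apply is_derive_unique; apply D1; auto).
      replace (Derive (fun x => Y x) T) with (Derive psi (phinv T) * (- (phinv T * psi (phinv T))) / beta)
        by (symmetry; apply is_derive_unique; apply D2; auto).
      assert (Hode := Hpsi_ode (phinv T) ltac:(lra)).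
      assert (Hps : 0 < psi (phinv T)) by (apply Hpsi_pos; lra).
      assert (HD : Derive psi (phinv T) = ((gamma + delta) / phinv T * psi (phinv T)
          - delta * (beta * (St + Et + It + Rt) - beta * St * exp (beta / gamma * Rt) * phinv T +
             gamma * ln (phinv T)) / phinv T) / psi (phinv T)).
      { apply (Rmult_eq_reg_r (psi (phinv T))).
        replace (Derive psi (phinv T) * psi (phinv T)) with
          ((Derive psi (phinv T) * psi (phinv T) - (gamma + delta) / phinv T * psi (phinv T)) + (gamma + delta) / phinv T * psi (phinv T)) by ring.
        rewrite Hode. field. split; lra. lra. }
      rewrite HD. unfold Y, Gu, N, c. field. repeat split; lra. }
  set (Ie := fun s => Gu (pe s) - Et * exp (- delta * s) - c * exp (- delta * s) * JJ (pe s)).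
  assert (HIe : forall t, 0 <= t -> I t = Ie t).
  { intros t Ht. rewrite E1 by auto. unfold Ip, Ie. rewrite Hpe by auto. reflexivity. }
  assert (HGu_c : forall w, 0 < w -> continuous Gu w).
  { intros w Hw. apply exd_cont. unfold Gu. auto_derive. auto. }
  assert (HIe_c : forall t, 0 <= t -> continuous Ie t).
  { intros t Ht. assert (Hr := Hpe_rng t).
    assert (C1 : continuous (fun s => Gu (pe s)) t).
    { apply (continuous_comp pe Gu). apply P5; auto. apply HGu_c. lra. }
    assert (C2 : continuous (fun s => exp (- delta * s)) t).
    { apply exd_cont. auto_derive. auto. }
    assert (C3 : continuous (fun s => JJ (pe s)) t).
    { apply (continuous_comp pe JJ). apply P5; auto. apply deriv_cont with (- h (pe t)). apply J2. lra. }
    unfold Ie.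
    apply (continuous_minus (fun s => Gu (pe s) - Et * exp (- delta * s)) (fun s => c * exp (- delta * s) * JJ (pe s))).
    apply (continuous_minus (fun s => Gu (pe s)) (fun s => Et * exp (- delta * s))). auto.
    apply (continuous_mult (fun _ => Et) (fun s => exp (- delta * s))). apply continuous_const. auto.
    apply (continuous_mult (fun s => c * exp (- delta * s)) (fun s => JJ (pe s))); auto.
    apply (continuous_mult (fun _ => c) (fun s => exp (- delta * s))). apply continuous_const. auto. }
  assert (Hpe0 : pe 0 = U0) by (rewrite Hpe by lra; exact P2).
  assert (HIe0 : Ie 0 = It).
  { unfold Ie. rewrite Hpe0, J4. unfold Gu. rewrite HcU0, HlnU0.
    replace (- delta * 0) with 0 by ring. rewrite exp_0. unfold N. ring. }
  set (Ye := fun s => psie (pe s) / beta).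
  assert (HYe : forall t, 0 <= t -> Y t = Ye t).
  { intros t Ht. unfold Y, Ye, psie. rewrite Hpe by auto. rewrite Rmin_left. reflexivity. apply P1; auto. }
  assert (HYe_c : continuous Ye 0).
  { unfold Ye. apply (continuous_mult (fun s => psie (pe s)) (fun _ => / beta)).
    apply (continuous_comp pe psie). apply P5; lra. apply Hpsie_c. rewrite Hpe0; lra.
    apply continuous_const. }
  assert (HYe0 : Ye 0 = It).
  { unfold Ye, psie. rewrite Hpe0, Rmin_left by lra. rewrite Hpsi_u0. field. lra. }
  set (EEe := fun s => exp (delta * s) * (Ie s - Ye s)).
  assert (HEEe_c : continuous EEe 0).
  { unfold EEe. apply (continuous_mult (fun s => exp (delta * s)) (fun s => Ie s - Ye s)).
    apply exd_cont. auto_derive. auto.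
    apply (continuous_minus Ie Ye). apply HIe_c; lra. auto. }
  assert (HEEe0 : EEe 0 = 0).
  { unfold EEe. rewrite HIe0, HYe0. ring. }
  assert (HEE : forall t, 0 <= t -> EE t = EEe t).
  { intros t Ht. unfold EE, EEe. rewrite HIe, HYe by auto. reflexivity. }
  assert (Z : forall b, 0 < b -> EE b = 0).
  { intros b Hb.
    assert (HEb : forall a, 0 < a < b -> EE a = EE b).
    { intros a Ha. destruct (MVT_gen EE a b (fun _ => 0)) as [x [Hx Heq]].
      - intros x Hx. rewrite Rmin_left in Hx by lra. apply D3. lra.
      - intros x Hx. rewrite Rmin_left in Hx by lra. apply deriv_contpt with 0. apply D3. lra.
      - lra. }
    destruct (Req_dec (EE b) 0) as [H0|H0]; auto. exfalso.
    assert (Hp : 0 < Rabs (EE b)) by (apply Rabs_pos_lt; auto).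
    destruct (proj1 (cont_eps EEe 0) HEEe_c _ Hp) as [d [Hd Hd1]].
    set (a := Rmin (d / 2) (b / 2)).
    assert (Ha1 : 0 < a) by (apply Rmin_pos; lra).
    assert (Ha2 : a <= d / 2) by apply Rmin_l.
    assert (Ha3 : a <= b / 2) by apply Rmin_r.
    specialize (Hd1 a). rewrite HEEe0, Rminus_0_r, Rminus_0_r in Hd1.
    rewrite <- HEE in Hd1 by lra. rewrite HEb in Hd1 by lra.
    apply (Rlt_irrefl (Rabs (EE b))). apply Hd1. rewrite Rabs_right; lra. }
  assert (ID : forall t, 0 <= t -> I t = Y t).
  { intros t Ht. destruct (Req_dec t 0) as [->|Ht0].
    - rewrite HIe, HYe by lra. rewrite HIe0, HYe0. reflexivity.
    - assert (H := Z t ltac:(lra)). unfold EE in H.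
      apply Rmult_integral in H. destruct H as [H|H].
      + pose proof (exp_pos (delta * t)). lra.
      + lra. }
  assert (HIpos : forall t, 0 <= t -> 0 < I t).
  { intros t Ht. rewrite ID by auto. unfold Y. apply Rdiv_lt_0_compat; auto. apply Hpsi_pos. apply P1; auto. }
  assert (HDer2 : forall T, 0 < T -> is_derive I T (delta * Gu (phinv T) - (gamma + delta) * I T)).
  { intros T HT. apply (is_derive_eq _ _ _ _ (D1 T HT)). rewrite ID by lra. unfold Y. field. lra. }
  assert (HDer : forall T, 0 < T -> is_derive I T
      (- (gamma + delta) / beta * psi (phinv T) + delta * (N - c * phinv T + gamma / beta * ln (phinv T)))).
  { intros T HT. apply (is_derive_eq _ _ _ _ (HDer2 T HT)). rewrite ID by lra. unfold Y, Gu. field. lra. }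
  set (k := gamma + delta).
  assert (Hk : 0 < k) by (unfold k; lra).
  assert (HGui : Gu ui = 0).
  { unfold Gu. rewrite Hlnui. unfold N. lra. }
  assert (Hlim : forall eps, 0 < eps -> exists M, forall t, M < t -> I t < eps).
  { intros eps He. set (e := eps / 2).
    assert (He' : 0 < e) by (unfold e; lra).
    assert (Hp : 0 < k * e / delta) by (apply Rdiv_lt_0_compat; [apply Rmult_lt_0_compat|]; lra).
    destruct (proj1 (cont_eps Gu ui) (HGu_c ui Hui) _ Hp) as [d [Hd Hd1]].
    set (w0 := Rmin (ui + d / 2) U0).
    assert (Hw0 : ui < w0 <= U0 /\ w0 <= ui + d / 2).
    { unfold w0, Rmin. destruct (Rle_dec (ui + d / 2) U0); lra. }
    assert (HPw0 : 0 <= PHI w0). { rewrite <- HPHI_U0. apply HPHI_le; lra. }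
    set (T0 := PHI w0 + 1).
    assert (HG : forall s, T0 <= s -> delta * Gu (phinv s) < k * e).
    { intros s Hs. assert (H1 : phinv s < w0) by (apply P4b; unfold T0 in Hs; lra).
      assert (H2 : ui < phinv s) by (apply P1; unfold T0 in Hs; lra).
      assert (H3 : Rabs (phinv s - ui) < d) by (rewrite Rabs_right; lra).
      specialize (Hd1 _ H3). rewrite HGui, Rminus_0_r in Hd1.
      apply Rabs_lt_between in Hd1.
      assert (Gu (phinv s) < k * e / delta) by lra.
      apply (Rmult_lt_compat_l delta) in H; auto.
      replace (delta * (k * e / delta)) with (k * e) in H by (field; lra). exact H. }
    set (V := fun s => exp (k * s) * (I s - e)).
    assert (HV : forall t, T0 < t -> V t <= V T0).
    { intros t Ht.
      destruct (MVT_gen V T0 t (fun s => exp (k * s) * (delta * Gu (phinv s) - k * e))) as [x [Hx Heq]].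
      - intros x Hx. rewrite Rmin_left in Hx by lra. rewrite Rmax_right in Hx by lra.
        assert (ExI : ex_derive I x) by (eexists; apply HDer2; unfold T0 in Hx; lra).
        unfold V. auto_derive. auto.
        replace (Derive (fun x => I x) x) with (delta * Gu (phinv x) - (gamma + delta) * I x)
          by (symmetry; apply is_derive_unique; apply HDer2; unfold T0 in Hx; lra).
        unfold k. ring.
      - intros x Hx. rewrite Rmin_left in Hx by lra. rewrite Rmax_right in Hx by lra.
        apply contpt_cont. apply exd_cont. unfold V.
        assert (ExI : ex_derive I x) by (eexists; apply HDer2; unfold T0 in Hx; lra).
        auto_derive. auto.
      - rewrite Rmin_left in Hx by lra. rewrite Rmax_right in Hx by lra.
        assert (H1 := HG x ltac:(lra)). assert (H2 := exp_pos (k * x)).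
        assert (exp (k * x) * (delta * Gu (phinv x) - k * e) * (t - T0) <= 0).
        { apply Rmult_le_0_r; [|lra]. apply Rmult_le_0_l; lra. }
        lra. }
    set (I0 := I T0).
    assert (HI0 : 0 < I0) by (apply HIpos; unfold T0; lra).
    exists (T0 + I0 / (k * e)). intros t Ht.
    assert (Hq : 0 < I0 / (k * e)) by (apply Rdiv_lt_0_compat; auto; apply Rmult_lt_0_compat; auto).
    assert (HVt := HV t ltac:(lra)). unfold V in HVt.
    replace (k * t) with (k * T0 + k * (t - T0)) in HVt by ring.
    rewrite exp_plus in HVt.
    set (P := exp (k * T0)) in HVt. set (X := exp (k * (t - T0))) in HVt.
    assert (HP : 0 < P) by apply exp_pos.
    assert (HX1 : 1 + k * (t - T0) < X) by (apply exp_ineq1; nra).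
    assert (HX2 : k * (t - T0) > k * (I0 / (k * e))) by (apply Rmult_lt_compat_l; lra).
    replace (k * (I0 / (k * e))) with (I0 / e) in HX2 by (field; lra).
    assert (HX3 : X * e > I0).
    { assert (X > I0 / e) by lra. apply (Rmult_lt_compat_r e) in H; auto.
      replace (I0 / e * e) with I0 in H by (field; lra). lra. }
    assert (HX4 : X * (I t - e) <= I0).
    { assert (P * (X * (I t - e)) <= P * I0).
      { assert (P * (I T0 - e) <= P * I0) by (unfold I0; nra). nra. }
      apply Rmult_le_reg_l in H; auto. }
    assert (HX0 : 0 < X) by apply exp_pos.
    assert (X * (I t - e) < X * e) by lra.
    apply Rmult_lt_reg_l in H; auto. unfold e in H. lra. }
  split.
  { apply is_lim_spec. intros eps.
    destruct (Hlim eps (cond_pos eps)) as [M HM].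
    exists (Rmax M 0). intros t Ht.
    assert (Hm1 := Rmax_l M 0). assert (Hm2 := Rmax_r M 0).
    change (Rabs (I t - 0) < eps). rewrite Rminus_0_r. rewrite Rabs_right. apply HM; lra.
    left. apply HIpos. lra. }
  split; [exact HIpos|].
  split; [exact HDer|].
  set (De := fun s => delta * Gu (pe s) - k * Ie s).
  assert (HDe_c : continuous De 0).
  { unfold De. apply (continuous_minus (fun s => delta * Gu (pe s)) (fun s => k * Ie s)).
    apply (continuous_mult (fun _ => delta) (fun s => Gu (pe s))). apply continuous_const.
    apply (continuous_comp pe Gu). apply P5; lra. apply HGu_c. rewrite Hpe0; lra.
    apply (continuous_mult (fun _ => k) Ie). apply continuous_const. apply HIe_c; lra. }
  assert (HDe0 : 0 < De 0).
  { unfold De. rewrite HIe0, Hpe0. unfold Gu. rewrite HcU0, HlnU0. unfold N, k.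
    assert (delta * Et > gamma * It).
    { apply (Rmult_lt_compat_l delta) in A2; auto. replace (delta * (gamma / delta * It)) with (gamma * It) in A2 by (field; lra). lra. }
    lra. }
  destruct (proj1 (cont_eps De 0) HDe_c _ HDe0) as [eta [Heta Heta1]].
  assert (HDe_pos : forall s, 0 <= s < eta -> 0 < De s).
  { intros s Hs. assert (Rabs (s - 0) < eta) by (rewrite Rminus_0_r, Rabs_right; lra).
    specialize (Heta1 s H). apply Rabs_lt_between in Heta1. lra. }
  set (t1 := eta / 2).
  assert (Ht1 : 0 < t1) by (unfold t1; lra).
  assert (HIt1 : forall s, 0 <= s <= t1 -> I s <= I t1).
  { intros s Hs. destruct (Req_dec s t1) as [->|Hne]. lra.
    rewrite !HIe by lra.
    destruct (MVT_gen Ie s t1 De) as [x [Hx Heq]].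
    - intros x Hx. rewrite Rmin_left in Hx by lra. rewrite Rmax_right in Hx by lra.
      apply (is_derive_ext_loc I).
      { exists (mkposreal x ltac:(lra)). intros y Hy. apply ballR in Hy. change (Rabs (y - x) < x) in Hy.
        apply Rabs_lt_between in Hy. apply HIe. lra. }
      apply (is_derive_eq _ _ _ _ (HDer2 x ltac:(lra))).
      unfold De. rewrite Hpe, HIe by lra. reflexivity.
    - intros x Hx. rewrite Rmin_left in Hx by lra. rewrite Rmax_right in Hx by lra.
      apply contpt_cont. apply HIe_c. lra.
    - rewrite Rmin_left in Hx by lra. rewrite Rmax_right in Hx by lra.
      assert (0 < De x) by (apply HDe_pos; unfold t1 in Hx; lra).
      assert (0 <= De x * (t1 - s)) by (apply Rmult_le_pos; lra). lra. }
  assert (HIt1p : 0 < I t1) by (apply HIpos; lra).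
  destruct (Hlim _ HIt1p) as [M HM].
  set (M' := Rmax M t1 + 1).
  assert (HM1 := Rmax_l M t1). assert (HM2 := Rmax_r M t1).
  destruct (continuity_ab_maj I t1 M') as [T2 [HT2 HT2r]].
  { unfold M'. lra. }
  { intros x Hx. apply deriv_contpt with (delta * Gu (phinv x) - (gamma + delta) * I x). apply HDer2. lra. }
  assert (Hglob : forall t, 0 <= t -> I t <= I T2).
  { intros t Ht. destruct (Rle_or_lt t t1) as [H1|H1].
    - apply Rle_trans with (I t1). apply HIt1; lra. apply HT2. unfold M'; lra.
    - destruct (Rle_or_lt t M') as [H2|H2].
      + apply HT2. lra.
      + assert (I t < I t1) by (apply HM; unfold M' in H2; lra).
        assert (I t1 <= I T2) by (apply HT2; unfold M'; lra). lra. }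
  exists T2. split; [lra|]. split; [|exact Hglob].
  assert (HD := HDer2 T2 ltac:(lra)).
  apply (is_derive_eq _ _ _ _ HD).
  assert (HD' := proj1 (is_derive_Reals _ _ _) HD).
  set (pr := exist (fun l => derivable_pt_lim I T2 l) _ HD' : derivable_pt I T2).
  rewrite <- (derive_pt_eq_0 I T2 _ pr HD').
  apply (deriv_maximum I 0 (T2 + 1) T2 pr); try lra.
  intros x Hx1 Hx2. apply Hglob. lra.
Qed.
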